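(* Let $\lambda\in\mathbb{C}\setminus\{\pm\pi i\}$ and let $N_\lambda$ be the Newton map of $F_\lambda(z)=e^{\lambda z}\sin\pi z$. Its exponential projection $g_\lambda$, given by $$g_\lambda(w)=we^{2\pi iM_\lambda(w)},\qquad M_\lambda(w)=-\frac{w-1}{(\lambda+\pi i)w-(\lambda-\pi i)},$$ has a unique essential singularity at $B_\lambda=\frac{\lambda-\pi i}{\lambda+\pi i}$. Moreover: (i) the set of fixed points of $g_\lambda$ consists of $0$ and $\infty$, with multipliers $g_\lambda'(0)=\exp\!\big(\frac{2\pi i}{\pi i-\lambda}\big)$ and $g_\lambda'(\infty)=\exp\!\big(\frac{2\pi i}{\pi i+\lambda}\big)$, and, for $\sigma\in\mathbb{Z}$, the points $w^*_\sigma=\frac{1+(\lambda-\pi i)\sigma}{1+(\lambda+\pi i)\sigma}$, with $g_\lambda'(w^*_\sigma)=1-\big(1+(\lambda-\pi i)\sigma\big)\big(1+(\lambda+\pi i)\sigma\big)$; (ii) the set of singular values of $g_\lambda$ consists of the fixed asymptotic values $0$ and $\infty$, the fixed critical point $w^*_0=1$, and the image of the only free critical point $C_\lambda=B_\lambda^2$.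
   Context: The exponential projection $g_\lambda$ satisfies $g_\lambda(e^{2\pi iz})=e^{2\pi iN_\lambda(z)}$; here $N_\lambda(z)=z+M_\lambda(e^{2\pi iz})$. The multiplier at $\infty$ is the derivative in the local coordinate $1/w$. Singular values are the closure of the set of critical values and asymptotic values (limits of $g_\lambda$ along paths tending to an essential singularity). *)

(* Defs.v *)
From Stdlib Require Import Reals ZArith.
From Coquelicot Require Import Coquelicot.
Open Scope C_scope.

Definition pii : C := (0%R, PI).

Definition Cexp (z : C) : C :=
  ((exp (fst z) * cos (snd z))%R, (exp (fst z) * sin (snd z))%R).

Definition Mlam (lam w : C) : C :=
  - (w - 1) / ((lam + pii) * w - (lam - pii)).

Definition glam (lam w : C) : C := w * Cexp (2 * pii * Mlam lam w).

Definition Blam (lam : C) : C := (lam - pii) / (lam + pii).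
Definition Clam (lam : C) : C := Blam lam * Blam lam.

(* the fixed points w*_sigma (finite when the denominator is nonzero) *)
Definition wstar_num (lam : C) (s : Z) : C := 1 + (lam - pii) * RtoC (IZR s).
Definition wstar_den (lam : C) (s : Z) : C := 1 + (lam + pii) * RtoC (IZR s).

Inductive sphere : Type := Fin (z : C) | Inf.

(* g_lambda as a self-map of the sphere (minus B_lambda), extended to infinity
   by g(infty) = infty; its value at B_lambda is irrelevant. *)
Definition gS (lam : C) (p : sphere) : sphere :=
  match p with Fin w => Fin (glam lam w) | Inf => Inf end.

(* standard charts: around a finite point the identity coordinate,
   around infinity the coordinate u = 1/w. *)
Definition chart_at (p : sphere) (u : C) : sphere :=
  match p with
  | Fin _ => Fin u
  | Inf => if Req_EM_T (fst u) 0 then (if Req_EM_T (snd u) 0 then Inf else Fin (/ u))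
           else Fin (/ u)
  end.

Definition coord_at (p : sphere) (q : sphere) : C :=
  match p, q with
  | Fin _, Fin w => w
  | Fin z, Inf => z   (* junk: never used for maps sending finite points near p to finite points *)
  | Inf, Fin w => / w
  | Inf, Inf => 0
  end.

Definition local_expr (f : sphere -> sphere) (p : sphere) (u : C) : C :=
  coord_at (f p) (f (chart_at p u)).

(* f has derivative m at p in local coordinates (for a fixed point p this is
   the multiplier of p) *)
Definition local_deriv (f : sphere -> sphere) (p : sphere) (m : C) : Prop :=
  is_derive (local_expr f p) (coord_at p p) m.

(* closeness on the sphere: a neighbourhood base of p indexed by eps > 0 *)
Definition sph_close (eps : R) (p q : sphere) : Prop :=
  match p, q with
  | Fin z, Fin w => (Cmod (w - z) < eps)%R
  | Fin _, Inf => False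
  | Inf, Inf => True
  | Inf, Fin w => (/ eps < Cmod w)%R
  end.

Definition sph_closure (S : sphere -> Prop) (p : sphere) : Prop :=
  forall eps : R, (0 < eps)%R -> exists q, S q /\ sph_close eps p q.

Definition critical_point (lam : C) (p : sphere) : Prop :=
  p <> Fin (Blam lam) /\ local_deriv (gS lam) p 0.

Definition critical_value (lam : C) (a : sphere) : Prop :=
  exists p, critical_point lam p /\ a = gS lam p.

Definition asymptotic_value (lam : C) (a : sphere) : Prop :=
  exists gamma : R -> C,
    (forall t : R, continuous gamma t) /\
    (forall t : R, gamma t <> Blam lam) /\
    filterlim gamma (Rbar_locally p_infty) (locally (Blam lam)) /\
    (forall eps : R, (0 < eps)%R -> exists T : R, forall t : R, (T < t)%R ->
        sph_close eps a (Fin (glam lam (gamma t)))).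

Definition singular_value (lam : C) (a : sphere) : Prop :=
  sph_closure (fun q => critical_value lam q \/ asymptotic_value lam q) a.

Definition essential_singularity_at (lam : C) (b : C) : Prop :=
  ~ exists a : sphere, forall eps : R, (0 < eps)%R -> exists delta : R, (0 < delta)%R /\
      forall w : C, w <> b -> (Cmod (w - b) < delta)%R -> sph_close eps a (Fin (glam lam w)).

(* Main.v *)
Require Import Defs.
From Stdlib Require Import Reals ZArith Lra Psatz.
From Coquelicot Require Import Coquelicot.
Open Scope C_scope.
Open Scope R_scope.

Lemma exp_bd (x : R) : Rabs x <= /2 -> 0 <= exp x - 1 - x <= 2 * x^2.
Proof.
  intros Hx. apply Rabs_le_between in Hx.
  pose proof (exp_ineq1_le x). pose proof (exp_ineq1_le (-x)).
  split; [lra|].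
  assert (He : exp x * exp (-x) = 1) by (rewrite <- exp_plus; replace (x + -x) with 0 by ring; apply exp_0).
  pose proof (exp_pos x).
  assert (exp x * (1 - x) <= 1) by nra.
  nra.
Qed.

Lemma sin_bd_pos (a : R) : 0 <= a <= 1 -> a - a^3/6 <= sin a <= a.
Proof.
  intros Ha.
  destruct (pre_sin_bound a 0 ltac:(lra) ltac:(lra)) as [H1 H2].
  unfold sin_approx, sin_term in H1, H2. simpl in H1, H2.
  field_simplify in H1; field_simplify in H2.
  assert (0 <= a^3) by (apply pow_le; lra).
  assert (a^5 <= a^3) by (replace (a^5) with (a^3*(a*a)) by ring; assert (a*a <= 1) by nra; nra).
  split; lra.
Qed.

Lemma sin_bd (y : R) : Rabs y <= 1 -> Rabs (sin y) <= Rabs y /\ Rabs (sin y - y) <= Rabs y ^ 3 / 6.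
Proof.
  intros Hy. destruct (Rle_dec 0 y) as [Hp|Hn].
  - rewrite (Rabs_right y) by lra. rewrite (Rabs_right y) in Hy by lra.
    destruct (sin_bd_pos y ltac:(lra)). assert (0 <= y^3) by (apply pow_le; lra).
    assert (y^3 <= y) by (replace (y^3) with (y*(y*y)) by ring; assert (y*y<=1) by nra; nra).
    split; apply Rabs_le; lra.
  - rewrite (Rabs_left y) by lra. rewrite (Rabs_left y) in Hy by lra.
    destruct (sin_bd_pos (-y) ltac:(lra)). rewrite sin_neg in *.
    assert (0 <= (-y)^3) by (apply pow_le; lra).
    assert ((-y)^3 <= -y) by (replace ((-y)^3) with ((-y)*((-y)*(-y))) by ring; assert ((-y)*(-y)<=1) by nra; nra).
    split; apply Rabs_le; lra.
Qed.

Lemma cos_bd (y : R) : Rabs y <= 1 -> Rabs (cos y - 1) <= y^2 / 2.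
Proof.
  intros Hy. replace y with (2 * (y/2)) at 1 by field. rewrite cos_2a_sin.
  destruct (sin_bd (y/2)) as [H _]. { rewrite Rabs_div by lra. rewrite (Rabs_right 2) by lra. lra. }
  rewrite Rabs_div in H by lra. rewrite (Rabs_right 2) in H by lra.
  assert (Hs : sin (y/2) * sin (y/2) <= y^2/4).
  { assert (Rabs (sin (y/2)) * Rabs (sin (y/2)) <= (Rabs y /2) * (Rabs y/2)).
    { apply Rmult_le_compat; try apply Rabs_pos; lra. }
    rewrite <- Rabs_mult in H0. assert (Rabs y * Rabs y = y^2) by (rewrite <- Rabs_mult; simpl; rewrite Rmult_1_r; apply Rabs_right; nra).
    assert (sin (y/2) * sin (y/2) <= Rabs (sin (y/2) * sin (y/2))) by apply Rle_abs. nra. }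
  assert (0 <= sin (y/2) * sin (y/2)) by nra.
  apply Rabs_le; lra.
Qed.

Open Scope C_scope.

Lemma Cmod_sq (u : C) : (Cmod u ^ 2 = fst u ^ 2 + snd u ^ 2)%R.
Proof. unfold Cmod. rewrite pow2_sqrt; [ring|]. nra. Qed.

Lemma Cmod_fst (u : C) : (Rabs (fst u) <= Cmod u)%R.
Proof. apply re_le_Cmod. Qed.

Lemma Cmod_snd (u : C) : (Rabs (snd u) <= Cmod u)%R.
Proof.
  assert (H := Cmod_sq u). pose proof (Cmod_ge_0 u).
  apply Rsqr_incr_0_var; [|lra]. rewrite <- Rsqr_abs. unfold Rsqr. simpl in H. nra.
Qed.

Lemma Cmod_le_sum (u : C) : (Cmod u <= Rabs (fst u) + Rabs (snd u))%R.
Proof.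
  assert (H := Cmod_sq u). pose proof (Cmod_ge_0 u).
  pose proof (Rabs_pos (fst u)). pose proof (Rabs_pos (snd u)).
  apply Rsqr_incr_0_var; [|lra]. unfold Rsqr. simpl in H.
  assert ((Rabs (fst u) * Rabs (fst u) = fst u * fst u)%R) by (rewrite <- Rabs_mult; apply Rabs_right; nra).
  assert ((Rabs (snd u) * Rabs (snd u) = snd u * snd u)%R) by (rewrite <- Rabs_mult; apply Rabs_right; nra).
  nra.
Qed.

Lemma Cexp_bd (h : C) : (Cmod h <= /2)%R -> (Cmod (Cexp h - 1 - h) <= 3 * Cmod h ^ 2)%R.
Proof.
  intros Hh. pose proof (Cmod_fst h) as Hx. pose proof (Cmod_snd h) as Hy.
  rewrite Cmod_sq.
  destruct h as [x y]; simpl fst in *; simpl snd in *.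
  eapply Rle_trans; [apply Cmod_le_sum|].
  unfold Cexp; simpl fst; simpl snd.
  destruct (exp_bd x ltac:(lra)) as [A1 A2].
  destruct (sin_bd y ltac:(lra)) as [S1 S2].
  pose proof (cos_bd y ltac:(lra)) as C1.
  set (A := (exp x - 1 - x)%R) in *. set (S := sin y) in *. set (Co := cos y) in *.
  assert (Ex : exp x = (1 + x + A)%R) by (unfold A; ring).
  match goal with |- (Rabs ?e + _ <= _)%R => replace e with (A + (1 + x + A) * (Co - 1))%R by (rewrite <- Ex; unfold A; simpl; ring) end.
  replace (exp x * S + - 0 + - y)%R with ((x + A) * S + (S - y))%R by (rewrite Ex; ring).
  apply Rabs_le_between in Hx. apply Rabs_le_between in Hy.
  apply Rabs_le_between in C1. apply Rabs_le_between in S1.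
  apply Rabs_le_between in S2.
  assert (Ry : (Rabs y ^ 3 / 6 <= y^2/12)%R).
  { pose proof (pow2_abs y). pose proof (Rabs_pos y).
    assert (Rabs y <= /2)%R by (apply Rabs_le; lra).
    replace (Rabs y ^3)%R with (Rabs y * Rabs y ^ 2)%R by ring. rewrite H. nra. }
  assert (Hx2 : (x^2 <= /4)%R) by nra.
  assert (Hy2 : (y^2 <= /4)%R) by nra.
  assert (P1 : (- (y^2) <= (1 + x + A) * (Co - 1) <= y^2)%R).
  { assert (0 <= 1 + x + A <= 2)%R by nra. nra. }
  assert (B1 : (Rabs (A + (1 + x + A) * (Co - 1)) <= 2 * x^2 + y^2)%R).
  { apply Rabs_le. split; nra. }
  assert (P2 : (Rabs ((x + A) * S) <= x^2 + y^2)%R).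
  { rewrite Rabs_mult. assert (Rabs (x + A) <= 2 * Rabs x)%R.
    { apply Rabs_le. destruct (Rle_dec 0 x). rewrite Rabs_right by lra. nra.
      rewrite Rabs_left by lra. nra. }
    assert (Rabs S <= Rabs y)%R by (apply Rabs_le; lra).
    assert (Rabs (x + A) * Rabs S <= 2 * Rabs x * Rabs y)%R.
    { apply Rmult_le_compat; try apply Rabs_pos; lra. }
    pose proof (pow2_abs x). pose proof (pow2_abs y).
    assert (0 <= (Rabs x - Rabs y)^2)%R by apply pow2_ge_0.
    assert (2 * Rabs x * Rabs y <= Rabs x ^2 + Rabs y ^2)%R by (ring_simplify in H4; lra). lra. }
  assert (B2 : (Rabs ((x + A) * S + (S - y)) <= x^2 + 2 * y^2)%R).
  { eapply Rle_trans; [apply Rabs_triang|].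
    assert (Rabs (S - y) <= y^2/12)%R by (apply Rabs_le; lra). lra. }
  lra.
Qed.

Lemma D_bound (f : C -> C) (z l : C) (d K : R) : (0 < d)%R ->
  (forall h, (Cmod h < d)%R -> (Cmod ((f (z + h) - f z - h * l)%C) <= K * Cmod h ^ 2)%R) ->
  is_derive f z l.
Proof.
  intros Hd HK. split. apply is_linear_scal_l.
  intros x Hx. apply (@is_filter_lim_locally_unique C_AbsRing (AbsRing_NormedModule C_AbsRing)) in Hx. subst x.
  intros eps.
  assert (He : (0 < Rmin d (eps / (Rabs K + 1)))%R).
  { apply Rmin_glb_lt; auto. apply Rdiv_lt_0_compat. apply cond_pos. pose proof (Rabs_pos K); lra. }
  exists (mkposreal _ He). intros y0 Hy. set (y := (y0 : C)). change (Cmod (y - z) < Rmin d (eps / (Rabs K + 1)))%R in Hy.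
  change (minus y z) with (y - z) in *. change (norm (y - z)) with (Cmod (y - z)) in *.
  change (Cmod ((f y - f z - (y - z) * l)%C) <= eps * Cmod (y - z))%R.
  assert (Hmin1 := Rmin_l d (eps / (Rabs K + 1))). assert (Hmin2 := Rmin_r d (eps / (Rabs K + 1))).
  specialize (HK (y - z) ltac:(lra)). replace (z + (y - z)) with y in HK by ring.
  eapply Rle_trans; [exact HK|].
  set (c := Cmod (y - z)) in *. pose proof (Cmod_ge_0 (y - z)). fold c in H.
  pose proof (Rabs_pos K). pose proof (Rle_abs K). pose proof (cond_pos eps).
  assert (c * (Rabs K + 1) <= eps)%R.
  { assert (E1 : (eps / (Rabs K + 1) * (Rabs K + 1) = eps)%R) by (field; lra).
    assert (c * (Rabs K + 1) <= Rmin d (eps / (Rabs K + 1)) * (Rabs K + 1))%R by (apply Rmult_le_compat_r; lra).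
    assert (Rmin d (eps / (Rabs K + 1)) * (Rabs K + 1) <= eps / (Rabs K + 1) * (Rabs K + 1))%R by (apply Rmult_le_compat_r; lra).
    lra. }
  replace (K * c ^ 2)%R with (K * c * c)%R by ring.
  assert (K * c <= (Rabs K + 1) * c)%R by nra.
  assert (K * c * c <= (Rabs K + 1) * c * c)%R by nra.
  assert (c * (Rabs K + 1) * c <= eps * c)%R by (apply Rmult_le_compat_r; lra).
  replace ((Rabs K + 1) * c * c)%R with (c * (Rabs K + 1) * c)%R in * by ring. lra.
Qed.

Lemma Cexp_add (u v : C) : Cexp (u + v) = Cexp u * Cexp v.
Proof.
  destruct u as [a b], v as [c d]. unfold Cexp. simpl.
  rewrite exp_plus, cos_plus, sin_plus.
  apply injective_projections; simpl; ring.
Qed.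

Lemma Cmod_Cexp (u : C) : Cmod (Cexp u) = exp (fst u).
Proof.
  destruct u as [a b]. unfold Cmod, Cexp; cbn [fst snd].
  replace ((exp a * cos b) ^ 2 + (exp a * sin b) ^ 2)%R with (exp a ^ 2 * ((sin b)^2 + (cos b)^2))%R by ring.
  pose proof (sin2_cos2 b). unfold Rsqr in H. replace ((sin b)^2 + (cos b)^2)%R with 1%R by (simpl; lra).
  rewrite Rmult_1_r. apply sqrt_pow2. apply Rlt_le, exp_pos.
Qed.

Lemma Cexp_neq0 (u : C) : Cexp u <> 0.
Proof.
  intros H. pose proof (Cmod_Cexp u). rewrite H, Cmod_0 in H0. pose proof (exp_pos (fst u)). lra.
Qed.

Lemma D_Cexp (z : C) : is_derive Cexp z (Cexp z).
Proof.
  apply (D_bound _ _ _ (/2) (3 * Cmod (Cexp z))); [lra|].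
  intros h Hh. rewrite Cexp_add.
  replace (Cexp z * Cexp h - Cexp z - h * Cexp z) with (Cexp z * (Cexp h - 1 - h)) by ring.
  rewrite Cmod_mult. replace (3 * Cmod (Cexp z) * Cmod h ^ 2)%R with (Cmod (Cexp z) * (3 * Cmod h ^ 2))%R by ring.
  apply Rmult_le_compat_l. apply Cmod_ge_0.
  apply Cexp_bd. lra.
Qed.

Lemma D_Cinv (z : C) : z <> 0 -> is_derive Cinv z (- (/ z * / z)).
Proof.
  intros Hz. pose proof (proj1 (Cmod_gt_0 z) Hz) as Hm.
  apply (D_bound _ _ _ (Cmod z / 2) (2 / Cmod z ^ 3)); [lra|].
  intros h Hh.
  assert (Tri : (Cmod z <= Cmod (z + h) + Cmod h)%R).
  { replace z with ((z + h) + - h) at 1 by ring. eapply Rle_trans; [apply Cmod_triangle|].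
    rewrite Cmod_opp. lra. }
  assert (Hzh : z + h <> 0).
  { intros E. rewrite E, Cmod_0 in Tri. lra. }
  replace (/ (z + h) - / z - h * - (/ z * / z)) with (h * h * (/ z * / z * / (z + h))) by (field; auto).
  rewrite !Cmod_mult, !Cmod_inv by auto.
  pose proof (proj1 (Cmod_gt_0 _) Hzh). pose proof (Cmod_ge_0 h).
  set (a := Cmod z) in *. set (b := Cmod (z + h)) in *. set (c := Cmod h) in *.
  assert (/ b <= 2 / a)%R.
  { apply (Rmult_le_reg_r b); auto. rewrite Rinv_l by lra. unfold Rdiv. 
    apply (Rmult_le_reg_r a); auto. field_simplify; lra. }
  replace (c * c * (/ a * / a * / b))%R with ((c * c) * (/ a * / a) * / b)%R by ring.
  replace (2 / a ^ 3 * c ^ 2)%R with ((c * c) * (/ a * / a) * (2 / a))%R by (field; lra).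
  apply Rmult_le_compat_l; auto.
  apply Rmult_le_pos; [nra|]. apply Rmult_le_pos; apply Rlt_le, Rinv_0_lt_compat; auto.
Qed.


Lemma tr1 (f : C -> C) z l : @is_derive C_AbsRing (AbsRing_NormedModule C_AbsRing) f z l -> @is_derive C_AbsRing C_NormedModule f z l.
Proof. intros [[H1 H2 H3] H4]. split. split. exact H1. exact H2. exact H3. exact H4. Qed.
Lemma tr2 (f : C -> C) z l : @is_derive C_AbsRing C_NormedModule f z l -> @is_derive C_AbsRing (AbsRing_NormedModule C_AbsRing) f z l.
Proof. intros [[H1 H2 H3] H4]. split. split. exact H1. exact H2. exact H3. exact H4. Qed.

Lemma D_mult (f g : C -> C) (z df dg : C) : is_derive f z df -> is_derive g z dg ->
  is_derive (fun x => f x * g x) z (df * g z + f z * dg).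
Proof. intros H1 H2. apply tr1. exact (is_derive_mult f g z df dg (tr2 _ _ _ H1) (tr2 _ _ _ H2) Cmult_comm). Qed.

Lemma D_comp (f g : C -> C) (z df dg : C) : is_derive f (g z) df -> is_derive g z dg ->
  is_derive (fun x => f (g x)) z (dg * df).
Proof. intros H1 H2. exact (is_derive_comp f g z df dg H1 (tr2 _ _ _ H2)). Qed.

Lemma D_plus (f g : C -> C) (z df dg : C) : is_derive f z df -> is_derive g z dg ->
  is_derive (fun x => f x + g x) z (df + dg).
Proof. intros H1 H2. exact (is_derive_plus f g z df dg H1 H2). Qed.

Lemma D_const (c z : C) : is_derive (fun _ : C => c) z (RtoC 0).
Proof. exact (@is_derive_const C_AbsRing C_NormedModule c z). Qed.

Lemma D_id (z : C) : is_derive (fun x : C => x) z (RtoC 1).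
Proof. apply tr1. exact (@is_derive_id C_AbsRing z). Qed.

Lemma D_ext (f g : C -> C) (z l l' : C) : (forall x, f x = g x) -> l = l' -> is_derive f z l -> is_derive g z l'.
Proof. intros H1 H2 H3. subst l'. exact (is_derive_ext f g z l H1 H3). Qed.

Lemma D_ext_loc (f g : C -> C) (z l : C) (d : R) : (0 < d)%R -> (forall x, (Cmod (x - z) < d)%R -> f x = g x) -> is_derive f z l -> is_derive g z l.
Proof.
  intros Hd H1 H3. apply (is_derive_ext_loc f g z l); auto.
  exists (mkposreal d Hd). intros y Hy. apply H1. exact Hy.
Qed.

Lemma D_unique (f : C -> C) (z l l' : C) : is_derive f z l -> is_derive f z l' -> l = l'.
Proof. intros H1 H2. apply is_C_derive_unique in H1. apply is_C_derive_unique in H2. congruence. Qed.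
Open Scope C_scope.

Lemma pii_neq0 : pii <> 0.
Proof. intros H. apply (f_equal snd) in H. simpl in H. pose proof PI_RGT_0. lra. Qed.

Lemma a_neq0 lam : lam <> - pii -> lam + pii <> 0.
Proof. intros H E. apply H. replace lam with ((lam + pii) - pii) by ring. rewrite E. ring. Qed.

Lemma b_neq0 lam : lam <> pii -> lam - pii <> 0.
Proof. intros H E. apply H. replace lam with ((lam - pii) + pii) by ring. rewrite E. ring. Qed.

Lemma Cmult_integral (x y : C) : x * y = 0 -> x = 0 \/ y = 0.
Proof.
  intros H. destruct (Ceq_dec x 0) as [Hx|Hx]; [left; auto|right].
  replace y with (/ x * (x * y)) by (field; auto). rewrite H. ring.
Qed.

Definition Dn (lam w : C) : C := (lam + pii) * w - (lam - pii).

Lemma Dn_B lam w : lam <> - pii -> Dn lam w = (lam + pii) * (w - Blam lam).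
Proof. intros H. unfold Dn, Blam. field. apply a_neq0; auto. Qed.

Lemma Dn_neq0 lam w : lam <> - pii -> w <> Blam lam -> Dn lam w <> 0.
Proof.
  intros H Hw E. rewrite Dn_B in E by auto. apply Cmult_integral in E. destruct E as [E|E].
  - exact (a_neq0 lam H E).
  - apply Hw. replace w with ((w - Blam lam) + Blam lam) by ring. rewrite E. ring.
Qed.

Lemma D_Mlam lam w : Dn lam w <> 0 ->
  is_derive (Mlam lam) w (- (2 * pii) / (Dn lam w * Dn lam w)).
Proof.
  intros HD.
  assert (H1 : is_derive (fun x => - (x - 1)) w (- (1))).
  { eapply D_ext; [| |apply (D_mult (fun _ => - (1)) (fun x => x - 1) w (RtoC 0) (RtoC 1))].
    - intros x. cbv beta. ring.
    - ring.
    - apply D_const.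
    - eapply D_ext; [| |apply (D_plus (fun x => x) (fun _ => - (1)) w (RtoC 1) (RtoC 0))].
      + intros; cbv beta; ring. + ring. + apply D_id. + apply D_const. }
  assert (H2 : is_derive (fun x => Dn lam x) w (lam + pii)).
  { eapply D_ext; [| |apply (D_plus (fun x => (lam + pii) * x) (fun _ => - (lam - pii)) w (lam + pii) (RtoC 0))].
    - intros; cbv beta; unfold Dn; ring. - ring.
    - eapply D_ext; [| |apply (D_mult (fun _ => lam + pii) (fun x => x) w (RtoC 0) (RtoC 1))].
      + intros; cbv beta; ring. + ring. + apply D_const. + apply D_id.
    - apply D_const. }
  assert (H3 : is_derive (fun x => / Dn lam x) w ((lam + pii) * - (/ Dn lam w * / Dn lam w))).
  { apply (D_comp Cinv (Dn lam)). apply D_Cinv; auto. exact H2. }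
  eapply D_ext; [| |apply (D_mult _ _ w _ _ H1 H3)].
  - intros x. unfold Mlam, Dn. reflexivity.
  - unfold Dn in *. field. auto.
Qed.

Definition gd (lam w : C) : C :=
  Cexp (2 * pii * Mlam lam w) * (1 + w * (2 * pii * (- (2 * pii) / (Dn lam w * Dn lam w)))).

Lemma D_glam lam w : Dn lam w <> 0 -> is_derive (glam lam) w (gd lam w).
Proof.
  intros HD.
  assert (H1 : is_derive (fun x => 2 * pii * Mlam lam x) w (2 * pii * (- (2 * pii) / (Dn lam w * Dn lam w)))).
  { eapply D_ext; [| |apply (D_mult (fun _ => 2 * pii) (Mlam lam) w (RtoC 0) _ (D_const _ _) (D_Mlam lam w HD))].
    - intros; reflexivity. - ring. }
  assert (H2 := D_comp Cexp _ w _ _ (D_Cexp _) H1).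
  eapply D_ext; [| |apply (D_mult (fun x => x) _ w _ _ (D_id w) H2)].
  - intros; unfold glam; reflexivity.
  - unfold gd. ring.
Qed.
Open Scope C_scope.

Lemma two_pii_mult (u : C) : 2 * pii * u = ((- (2 * PI * snd u))%R, (2 * PI * fst u)%R).
Proof. destruct u as [x y]. unfold pii. apply injective_projections; simpl; ring. Qed.

Lemma Cexp_pair (x y : R) : Cexp (x, y) = ((exp x * cos y)%R, (exp x * sin y)%R).
Proof. reflexivity. Qed.

Lemma sin_2piZ (k : Z) : sin (2 * PI * IZR k) = 0%R.
Proof. apply sin_eq_0_1. exists (2 * k)%Z. rewrite mult_IZR. simpl. ring. Qed.

Lemma cos_2piZ (k : Z) : cos (2 * PI * IZR k) = 1%R.
Proof.
  replace (2 * PI * IZR k)%R with (2 * (IZR k * PI))%R by ring. rewrite cos_2a_sin.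
  rewrite sin_eq_0_1 by (exists k; reflexivity). ring.
Qed.

Lemma Cexp_int (u : C) (k : Z) : fst u = IZR k -> Cexp (2 * pii * u) = RtoC (exp (- (2 * PI * snd u))).
Proof.
  intros H. rewrite two_pii_mult, Cexp_pair, H, cos_2piZ, sin_2piZ.
  apply injective_projections; simpl; ring.
Qed.

Lemma Cexp_half (u : C) (k : Z) : fst u = (IZR k + /2)%R -> Cexp (2 * pii * u) = RtoC (- exp (- (2 * PI * snd u))).
Proof.
  intros H. rewrite two_pii_mult, Cexp_pair, H.
  replace (2 * PI * (IZR k + / 2))%R with (2 * PI * IZR k + PI)%R by field.
  rewrite neg_cos, neg_sin, cos_2piZ, sin_2piZ.
  apply injective_projections; simpl; ring.
Qed.

Lemma Cexp_intR (k : Z) : Cexp (2 * pii * RtoC (IZR k)) = 1.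
Proof. rewrite (Cexp_int _ k) by reflexivity.
  replace (- (2 * PI * snd (RtoC (IZR k))))%R with 0%R by (simpl; ring). rewrite exp_0. reflexivity. Qed.

Lemma Cexp_halfR (k : Z) : Cexp (2 * pii * RtoC (IZR k + /2)) = - (1).
Proof. rewrite (Cexp_half _ k) by reflexivity.
  replace (- (2 * PI * snd (RtoC (IZR k + /2))))%R with 0%R by (simpl; ring). rewrite exp_0.
  apply injective_projections; simpl; ring. Qed.

Lemma Cexp_0 : Cexp 0 = 1.
Proof. unfold Cexp. simpl. rewrite exp_0, cos_0, sin_0. apply injective_projections; simpl; ring. Qed.

Lemma Cexp_eq1 (u : C) : Cexp u = 1 -> exists k : Z, u = 2 * pii * RtoC (IZR k).
Proof.
  destruct u as [x y]. rewrite Cexp_pair. intros H.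
  assert (H1 : (exp x * cos y = 1)%R) by (apply (f_equal fst) in H; exact H).
  assert (H2 : (exp x * sin y = 0)%R) by (apply (f_equal snd) in H; exact H).
  pose proof (exp_pos x).
  assert (Hs : sin y = 0%R).
  { destruct (Rmult_integral _ _ H2); auto; lra. }
  destruct (sin_eq_0_0 y Hs) as [k Hk].
  destruct (Z.Even_or_Odd k) as [[j Hj]|[j Hj]]; subst k.
  - exists j. rewrite two_pii_mult. simpl fst; simpl snd.
    assert (Hc : cos y = 1%R).
    { rewrite Hk, mult_IZR. replace (IZR 2 * IZR j * PI)%R with (2 * PI * IZR j)%R by (simpl; ring). apply cos_2piZ. }
    rewrite Hc, Rmult_1_r in H1. rewrite <- exp_0 in H1. apply exp_inv in H1.
    rewrite Hk, mult_IZR, H1. apply injective_projections; simpl; ring.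
  - exfalso.
    assert (Hc : cos y = (-1)%R).
    { rewrite Hk, plus_IZR, mult_IZR. replace ((IZR 2 * IZR j + IZR 1) * PI)%R with (2 * PI * IZR j + PI)%R by (simpl; ring).
      rewrite neg_cos, cos_2piZ. ring. }
    rewrite Hc in H1. lra.
Qed.

Section Lam.
Variable lam : C.
Hypothesis hp : lam <> pii.
Hypothesis hm : lam <> - pii.

Let ha := a_neq0 lam hm.
Let hb := b_neq0 lam hp.

Lemma Minv_Dn (m : C) : 1 + m * (lam + pii) <> 0 ->
  Dn lam ((1 + m * (lam - pii)) / (1 + m * (lam + pii))) = 2 * pii / (1 + m * (lam + pii)).
Proof. intros H. unfold Dn. field. auto. Qed.

Lemma Minv_M (m : C) : 1 + m * (lam + pii) <> 0 ->
  Mlam lam ((1 + m * (lam - pii)) / (1 + m * (lam + pii))) = m.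
Proof.
  intros H. unfold Mlam. field. split; auto.
  replace ((lam + pii) * (1 + m * (lam - pii)) - (lam - pii) * (1 + m * (lam + pii))) with (2 * pii) by ring.
  intros E. apply pii_neq0. replace pii with (/2 * (2 * pii)) by field. rewrite E. ring.
Qed.

Lemma Minv_Dn_neq0 (m : C) : 1 + m * (lam + pii) <> 0 ->
  Dn lam ((1 + m * (lam - pii)) / (1 + m * (lam + pii))) <> 0.
Proof.
  intros H. rewrite Minv_Dn by auto. intros E. apply pii_neq0.
  replace pii with (/2 * (2 * pii / (1 + m * (lam + pii))) * (1 + m * (lam + pii))) by (field; auto).
  rewrite E. ring.
Qed.

Lemma Minv_B (m : C) : 1 + m * (lam + pii) <> 0 ->
  (1 + m * (lam - pii)) / (1 + m * (lam + pii)) - Blam lam = 2 * pii / ((lam + pii) * (1 + m * (lam + pii))).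
Proof. intros H. unfold Blam. field. auto. Qed.

Lemma B_neq0 : Blam lam <> 0.
Proof. intros E. apply hb. transitivity (Blam lam * (lam + pii)). unfold Blam; field; auto.
  rewrite E. ring. Qed.

Lemma B_neq1 : Blam lam <> 1.
Proof. intros E. apply pii_neq0.
  assert (H : lam - pii = lam + pii).
  { transitivity (Blam lam * (lam + pii)). unfold Blam; field; auto. rewrite E; ring. }
  replace pii with (/2 * ((lam + pii) - (lam - pii))) by field. rewrite H. ring. Qed.

Lemma fixed_fin (w : C) : w <> Blam lam ->
  (glam lam w = w <-> w = 0 \/ exists s : Z, wstar_den lam s <> 0 /\ w = wstar_num lam s / wstar_den lam s).
Proof.
  intros Hw. pose proof (Dn_neq0 lam w hm Hw) as HD. split.
  - intros H. destruct (Ceq_dec w 0) as [H0|H0]; [left; auto|right].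
    assert (E : Cexp (2 * pii * Mlam lam w) = 1).
    { unfold glam in H. replace (Cexp (2 * pii * Mlam lam w)) with (/ w * (w * Cexp (2 * pii * Mlam lam w))) by (field; auto).
      rewrite H. field. auto. }
    apply Cexp_eq1 in E. destruct E as [k Hk].
    assert (HM : Mlam lam w = RtoC (IZR k)).
    { replace (Mlam lam w) with (/ (2 * pii) * (2 * pii * Mlam lam w)) by (field; apply pii_neq0).
      rewrite Hk. field. apply pii_neq0. }
    assert (Hlin : w * (1 + RtoC (IZR k) * (lam + pii)) = 1 + RtoC (IZR k) * (lam - pii)).
    { unfold Mlam in HM. fold (Dn lam w) in HM.
      assert (- (w - 1) = RtoC (IZR k) * Dn lam w) by (rewrite <- HM; field; auto).
      unfold Dn in H1. replace (w * (1 + RtoC (IZR k) * (lam + pii))) with (w + RtoC (IZR k) * ((lam + pii) * w)) by ring.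
      apply (f_equal (fun t => t + w + RtoC (IZR k) * (lam - pii))) in H1. ring_simplify in H1. ring_simplify. 
      rewrite <- H1. ring. }
    exists k. unfold wstar_den, wstar_num.
    assert (Hden : 1 + (lam + pii) * RtoC (IZR k) <> 0).
    { intros E0. rewrite Cmult_comm in E0. rewrite E0, Cmult_0_r in Hlin.
      assert (Hk0 : RtoC (IZR k) * (2 * pii) = 0).
      { replace (RtoC (IZR k) * (2 * pii)) with ((1 + RtoC (IZR k) * (lam + pii)) - (1 + RtoC (IZR k) * (lam - pii))) by ring.
        rewrite E0, <- Hlin. ring. }
      apply Cmult_integral in Hk0. destruct Hk0 as [Hk0|Hk0].
      - rewrite Hk0, Cmult_0_l, Cplus_0_r in E0. apply C1_nz. exact E0.
      - apply pii_neq0. replace pii with (/2 * (2 * pii)) by field. rewrite Hk0. ring. }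
    split; auto. rewrite (Cmult_comm (lam + pii)), (Cmult_comm (lam - pii)). rewrite <- Hlin. field.
    rewrite Cmult_comm. auto.
  - intros [H|[s [Hs H]]].
    + subst w. unfold glam. ring.
    + unfold wstar_den, wstar_num in *. rewrite (Cmult_comm (lam + pii)) in *. rewrite (Cmult_comm (lam - pii)) in *.
      subst w. unfold glam. rewrite Minv_M by auto. rewrite Cexp_intR. ring.
Qed.


Lemma gd_0 : gd lam 0 = Cexp (2 * pii / (pii - lam)).
Proof.
  unfold gd. rewrite Cmult_0_l, Cplus_0_r, Cmult_1_r. f_equal. unfold Mlam.
  field. split.
  - intros E. apply hp. replace lam with (pii - (pii - lam)) by ring. rewrite E. ring.
  - intros E. apply hb. replace (lam - pii) with (- ((lam + pii) * 0 - (lam - pii))) by ring. rewrite E. ring.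
Qed.

Lemma gd_wstar (s : Z) : wstar_den lam s <> 0 ->
  gd lam (wstar_num lam s / wstar_den lam s) = 1 - wstar_num lam s * wstar_den lam s.
Proof.
  unfold wstar_den, wstar_num. rewrite (Cmult_comm (lam + pii)), (Cmult_comm (lam - pii)). intros Hs.
  unfold gd. rewrite Minv_M by auto. rewrite Cexp_intR, Cmult_1_l. rewrite Minv_Dn by auto.
  field. split; auto. apply pii_neq0.
Qed.

Lemma Dn_1 : Dn lam 1 = 2 * pii.
Proof. unfold Dn. ring. Qed.

Lemma gd_1 : gd lam 1 = 0.
Proof. unfold gd. rewrite Dn_1. field. apply pii_neq0. Qed.

Lemma glam_1 : glam lam 1 = 1.
Proof. unfold glam, Mlam. replace (- (1 - 1) / ((lam + pii) * 1 - (lam - pii))) with (RtoC 0).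
  rewrite Cmult_0_r, Cexp_0. ring. unfold Cdiv. ring. Qed.

Lemma Dn_C : Dn lam (Clam lam) = - (2 * pii) * Blam lam.
Proof. unfold Dn, Clam, Blam. field. auto. Qed.

Lemma gd_C : gd lam (Clam lam) = 0.
Proof. unfold gd. rewrite Dn_C. unfold Clam. field. split. apply B_neq0. apply pii_neq0. Qed.

Lemma C_neq_B : Clam lam <> Blam lam.
Proof. unfold Clam. intros E. apply B_neq1.
  replace (Blam lam) with (/ Blam lam * (Blam lam * Blam lam)) by (field; apply B_neq0).
  rewrite E. field. apply B_neq0. Qed.

Lemma gd_zero (w : C) : Dn lam w <> 0 -> gd lam w = 0 -> w = 1 \/ w = Clam lam.
Proof.
  intros HD H. unfold gd in H. apply Cmult_integral in H. destruct H as [H|H].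
  { exfalso. exact (Cexp_neq0 _ H). }
  assert (H2 : ((lam + pii) * (lam + pii) * w - (lam - pii) * (lam - pii)) * (w - 1) = 0).
  { transitivity ((Dn lam w * Dn lam w) * (1 + w * (2 * pii * (- (2 * pii) / (Dn lam w * Dn lam w))))).
    - unfold Dn in *. field. auto.
    - rewrite H. ring. }
  apply Cmult_integral in H2. destruct H2 as [H2|H2].
  - right. unfold Clam, Blam. 
    assert (Ha2 : (lam + pii) * (lam + pii) <> 0) by (intros E; apply Cmult_integral in E; destruct E; auto).
    replace w with (/ ((lam + pii) * (lam + pii)) * ((lam + pii) * (lam + pii) * w)) by (field; auto).
    replace ((lam + pii) * (lam + pii) * w) with ((lam - pii) * (lam - pii)).
    field. auto.
    replace ((lam + pii) * (lam + pii) * w) with (((lam + pii) * (lam + pii) * w - (lam - pii) * (lam - pii)) + (lam - pii) * (lam - pii)) by ring.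
    rewrite H2. ring.
  - left. replace w with ((w - 1) + 1) by ring. rewrite H2. ring.
Qed.

End Lam.
Open Scope C_scope.

Lemma local_fin lam w u : local_expr (gS lam) (Fin w) u = glam lam u.
Proof. reflexivity. Qed.

Lemma D_lin (c1 c2 z : C) : is_derive (fun u => c1 + c2 * u) z c2.
Proof.
  eapply D_ext; [| |apply (D_plus (fun _ => c1) (fun u => c2 * u) z (RtoC 0) c2)].
  - intros; reflexivity. - ring. - apply D_const.
  - eapply D_ext; [| |apply (D_mult (fun _ => c2) (fun u => u) z (RtoC 0) (RtoC 1))].
    + intros; reflexivity. + ring. + apply D_const. + apply D_id.
Qed.

Section Lam.
Variable lam : C.
Hypothesis hp : lam <> pii.
Hypothesis hm : lam <> - pii.
Let ha := a_neq0 lam hm.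
Let hb := b_neq0 lam hp.

Definition hinf (u : C) : C :=
  u * Cexp (2 * pii * ((1 + (- (1)) * u) * / ((lam + pii) + (- (lam - pii)) * u))).

Definition d0 : R := (Cmod (lam + pii) / (Cmod (lam - pii) + 1))%R.

Lemma d0_pos : (0 < d0)%R.
Proof. unfold d0. apply Rdiv_lt_0_compat. apply Cmod_gt_0; auto. pose proof (Cmod_ge_0 (lam - pii)). lra. Qed.

Lemma den_inf_neq0 (u : C) : (Cmod u < d0)%R -> (lam + pii) + (- (lam - pii)) * u <> 0.
Proof.
  intros Hu E. unfold d0 in Hu.
  assert (H1 : lam + pii = (lam - pii) * u) by (replace (lam + pii) with ((lam + pii) + - (lam - pii) * u + (lam - pii) * u) by ring; rewrite E; ring).
  apply (f_equal Cmod) in H1. rewrite Cmod_mult in H1.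
  pose proof (Cmod_ge_0 (lam - pii)). pose proof (Cmod_ge_0 u). pose proof (proj1 (Cmod_gt_0 _) ha).
  assert (Cmod u * (Cmod (lam - pii) + 1) < Cmod (lam + pii))%R.
  { apply (Rmult_lt_compat_r (Cmod (lam - pii) + 1)) in Hu; [|lra].
    unfold Rdiv in Hu. rewrite Rmult_assoc, Rinv_l, Rmult_1_r in Hu by lra. lra. }
  nra.
Qed.

Lemma local_inf (u : C) : (Cmod u < d0)%R -> local_expr (gS lam) Inf u = hinf u.
Proof.
  intros Hu. pose proof (den_inf_neq0 u Hu) as Hden.
  unfold local_expr, chart_at, gS, coord_at.
  assert (Hgen : u <> 0 -> / glam lam (/ u) = hinf u).
  { intros Hu0. unfold glam, hinf.
    assert (HM : Mlam lam (/ u) = - ((1 + - (1) * u) * / (lam + pii + - (lam - pii) * u))).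
    { unfold Mlam. field. split; auto. }
    rewrite HM. set (q := (1 + - (1) * u) * / (lam + pii + - (lam - pii) * u)).
    assert (Hq : Cexp (2 * pii * - q) * Cexp (2 * pii * q) = 1).
    { rewrite <- Cexp_add. replace (2 * pii * - q + 2 * pii * q) with (RtoC 0) by ring. apply Cexp_0. }
    pose proof (Cexp_neq0 (2 * pii * - q)).
    replace (Cexp (2 * pii * q)) with (/ Cexp (2 * pii * - q)).
    field. split; auto.
    replace (Cexp (2 * pii * q)) with (/ Cexp (2 * pii * - q) * (Cexp (2 * pii * - q) * Cexp (2 * pii * q))) by (field; auto).
    rewrite Hq. ring. }
  destruct u as [u1 u2]. simpl fst; simpl snd.
  destruct (Req_EM_T u1 0) as [E1|E1]; [destruct (Req_EM_T u2 0) as [E2|E2]|].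
  - subst. unfold hinf. replace (0%R, 0%R) with (RtoC 0) by reflexivity. ring.
  - apply Hgen. intros E. apply (f_equal snd) in E. simpl in E. auto.
  - apply Hgen. intros E. apply (f_equal fst) in E. simpl in E. auto.
Qed.

Lemma D_inf : local_deriv (gS lam) Inf (Cexp (2 * pii / (pii + lam))).
Proof.
  unfold local_deriv. change (coord_at Inf Inf) with (RtoC 0).
  apply (D_ext_loc hinf _ _ _ d0 d0_pos).
  { intros x Hx. rewrite local_inf; auto. replace x with (x - 0) by ring. auto. }
  assert (H0 : lam + pii + - (lam - pii) * 0 <> 0) by (replace (lam + pii + - (lam - pii) * 0) with (lam + pii) by ring; auto).
  assert (H1 := D_lin 1 (- (1)) 0).
  assert (H2 := D_lin (lam + pii) (- (lam - pii)) 0).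
  assert (H3 := D_comp Cinv _ 0 _ _ (D_Cinv _ H0) H2).
  assert (H4 := D_mult _ _ 0 _ _ H1 H3).
  assert (H5 := D_mult (fun _ => 2 * pii) _ 0 _ _ (D_const _ _) H4).
  assert (H6 := D_comp Cexp _ 0 _ _ (D_Cexp _) H5).
  assert (H7 := D_mult (fun x => x) _ 0 _ _ (D_id _) H6).
  eapply D_ext; [| |exact H7].
  - intros x. reflexivity.
  - rewrite Cmult_0_l, Cplus_0_r, Cmult_1_l. f_equal.
    replace (lam + pii + - (lam - pii) * 0) with (lam + pii) by ring.
    field. intros E. apply ha. rewrite <- E. ring.
Qed.

Lemma ex_inf : ex_derive (local_expr (gS lam) Inf) (coord_at Inf Inf).
Proof. eexists. exact D_inf. Qed.

End Lam.
Open Scope C_scope.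

Lemma Cmod_tri2 (x y : C) : (Cmod x <= Cmod y + Cmod (x - y))%R.
Proof. replace x with (y + (x - y)) at 1 by ring. apply Cmod_triangle. Qed.

Lemma Cmod_2pii : Cmod (2 * pii) = (2 * PI)%R.
Proof.
  unfold Cmod. replace (fst (2 * pii)) with 0%R by (unfold pii; simpl; ring).
  replace (snd (2 * pii)) with (2 * PI)%R by (unfold pii; simpl; ring).
  replace (0 ^ 2 + (2 * PI) ^ 2)%R with ((2 * PI) ^ 2)%R by ring. apply sqrt_pow2. pose proof PI_RGT_0; lra.
Qed.

Section Lam.
Variable lam : C.
Hypothesis hp : lam <> pii.
Hypothesis hm : lam <> - pii.
Let ha := a_neq0 lam hm.
Let hb := b_neq0 lam hp.

Definition wm (m : R) : C := (1 + RtoC m * (lam - pii)) / (1 + RtoC m * (lam + pii)).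

Lemma wm_close (d : R) : (0 < d)%R -> exists M0 : R, forall m : R, (M0 <= m)%R ->
  1 + RtoC m * (lam + pii) <> 0 /\ wm m <> Blam lam /\ (Cmod (wm m - Blam lam) < d)%R.
Proof.
  intros Hd. set (A := Cmod (lam + pii)). assert (HA : (0 < A)%R) by (apply Cmod_gt_0; auto).
  exists ((2 * PI / (A * d) + 1) / A + 1)%R. intros m Hm.
  pose proof PI_RGT_0.
  assert (H0 : (0 < 2 * PI / (A * d))%R) by (apply Rdiv_lt_0_compat; nra).
  assert (Hm0 : (0 < m)%R).
  { assert (0 < (2 * PI / (A * d) + 1) / A)%R by (apply Rdiv_lt_0_compat; lra). lra. }
  assert (HmA : (2 * PI / (A * d) + 1 + A <= m * A)%R).
  { apply (Rmult_le_compat_r A) in Hm; [|lra]. 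
    replace (((2 * PI / (A * d) + 1) / A + 1) * A)%R with (2 * PI / (A * d) + 1 + A)%R in Hm by (field; lra). lra. }
  assert (Hmod : (m * A - 1 <= Cmod (1 + RtoC m * (lam + pii)))%R).
  { pose proof (Cmod_tri2 (RtoC m * (lam + pii)) (1 + RtoC m * (lam + pii))).
    rewrite Cmod_mult, Cmod_R, Rabs_right in H1 by lra.
    replace (RtoC m * (lam + pii) - (1 + RtoC m * (lam + pii))) with (- (1)) in H1 by ring.
    rewrite Cmod_opp, Cmod_1 in H1. fold A in H1. lra. }
  assert (Hnz : 1 + RtoC m * (lam + pii) <> 0).
  { intros E. rewrite E, Cmod_0 in Hmod. lra. }
  split; auto.
  assert (HB : wm m - Blam lam = 2 * pii / ((lam + pii) * (1 + RtoC m * (lam + pii)))) by (unfold wm; eapply Minv_B; eauto).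
  assert (Hprod : (lam + pii) * (1 + RtoC m * (lam + pii)) <> 0).
  { intros E. apply Cmult_integral in E. destruct E; auto. }
  split.
  - intros E. rewrite E in HB. apply pii_neq0.
    replace pii with (/2 * (2 * pii / ((lam + pii) * (1 + RtoC m * (lam + pii)))) * ((lam + pii) * (1 + RtoC m * (lam + pii)))) by (field; auto).
    rewrite <- HB. ring.
  - rewrite HB.
  - rewrite Cmod_div by auto. rewrite Cmod_2pii, Cmod_mult. fold A.
    set (X := Cmod (1 + RtoC m * (lam + pii))) in *.
    assert (HX : (2 * PI / (A * d) < X)%R) by lra.
    apply (Rmult_lt_reg_r (A * X)); [nra|].
    unfold Rdiv. rewrite Rmult_assoc, Rinv_l, Rmult_1_r by nra.
    apply (Rmult_lt_compat_l (A * d)) in HX; [|nra].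
    replace (A * d * (2 * PI / (A * d)))%R with (2 * PI)%R in HX by (field; lra). nra.
Qed.

Lemma glam_wm_int (k : Z) : 1 + RtoC (IZR k) * (lam + pii) <> 0 -> glam lam (wm (IZR k)) = wm (IZR k).
Proof.
  intros H. unfold glam. replace (Mlam lam (wm (IZR k))) with (RtoC (IZR k)) by (symmetry; unfold wm; eapply Minv_M; eauto).
  rewrite Cexp_intR. ring.
Qed.

Lemma glam_wm_half (k : Z) : 1 + RtoC (IZR k + /2) * (lam + pii) <> 0 -> glam lam (wm (IZR k + /2)) = - wm (IZR k + /2).
Proof.
  intros H. unfold glam. replace (Mlam lam (wm (IZR k + /2))) with (RtoC (IZR k + /2)) by (symmetry; unfold wm; eapply Minv_M; eauto).
  rewrite Cexp_halfR. ring.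
Qed.

Lemma ess_sing : essential_singularity_at lam (Blam lam).
Proof.
  intros [z Hz]. pose proof (B_neq0 lam hp hm) as HB0. pose proof (proj1 (Cmod_gt_0 _) HB0) as HB.
  destruct z as [z|].
  - destruct (Hz (Cmod (Blam lam) / 2)%R ltac:(lra)) as [d [Hd Hw]].
    destruct (wm_close (Rmin d (Cmod (Blam lam) / 2)) ltac:(apply Rmin_glb_lt; lra)) as [M0 HM0].
    set (k := up M0). destruct (archimed M0) as [Hk1 _]. fold k in Hk1.
    destruct (HM0 (IZR k) ltac:(lra)) as [N1 [W1 C1]].
    destruct (HM0 (IZR k + /2)%R ltac:(lra)) as [N2 [W2 C2]].
    pose proof (Rmin_l d (Cmod (Blam lam) / 2)). pose proof (Rmin_r d (Cmod (Blam lam) / 2)).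
    pose proof (Hw _ W1 ltac:(lra)) as G1. pose proof (Hw _ W2 ltac:(lra)) as G2.
    simpl in G1, G2. rewrite glam_wm_int in G1 by auto. rewrite glam_wm_half in G2 by auto.
    set (w1 := wm (IZR k)) in *. set (w2 := wm (IZR k + /2)) in *.
    assert (T1 : (Cmod (w1 + w2) < Cmod (Blam lam))%R).
    { replace (w1 + w2) with ((w1 - z) - (- w2 - z)) by ring.
      eapply Rle_lt_trans. apply Cmod_tri2 with (y := w1 - z). 
      replace (w1 - z - (- w2 - z) - (w1 - z)) with (- (- w2 - z)) by ring. rewrite Cmod_opp. lra. }
    assert (T2 : (2 * Cmod (Blam lam) <= Cmod (w1 + w2) + Cmod (w1 - Blam lam) + Cmod (w2 - Blam lam))%R).
    { replace (2 * Cmod (Blam lam))%R with (Cmod (2 * Blam lam)).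
      2: { rewrite Cmod_mult. replace (Cmod 2) with 2%R. ring. rewrite Cmod_R. rewrite Rabs_right; lra. }
      eapply Rle_trans. apply Cmod_tri2 with (y := w1 + w2).
      replace (2 * Blam lam - (w1 + w2)) with (- (w1 - Blam lam) + - (w2 - Blam lam)) by ring.
      eapply Rle_trans. apply Rplus_le_compat_l. apply Cmod_triangle. rewrite !Cmod_opp. lra. }
    lra.
  - destruct (Hz (/ (Cmod (Blam lam) + 1))%R ltac:(apply Rinv_0_lt_compat; lra)) as [d [Hd Hw]].
    destruct (wm_close (Rmin d 1) ltac:(apply Rmin_glb_lt; lra)) as [M0 HM0].
    set (k := up M0). destruct (archimed M0) as [Hk1 _]. fold k in Hk1.
    destruct (HM0 (IZR k) ltac:(lra)) as [N1 [W1 C1]].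
    pose proof (Rmin_l d 1). pose proof (Rmin_r d 1).
    pose proof (Hw _ W1 ltac:(lra)) as G1. simpl in G1. rewrite glam_wm_int in G1 by auto.
    rewrite Rinv_inv in G1.
    pose proof (Cmod_tri2 (wm (IZR k)) (Blam lam)). lra.
Qed.

End Lam.
Open Scope C_scope.

Lemma cont_C (f : R -> C) (t : R) : continuous (fun s => fst (f s)) t -> continuous (fun s => snd (f s)) t -> continuous f t.
Proof.
  intros H1 H2 P [eps HP].
  assert (A1 := H1 (ball (fst (f t)) eps) (locally_ball _ eps)).
  assert (A2 := H2 (ball (snd (f t)) eps) (locally_ball _ eps)).
  unfold filtermap in *. generalize (filter_and _ _ A1 A2). apply filter_imp.
  intros s [B1 B2]. apply HP. split; auto.
Qed.

Lemma lim_C_of (g : R -> C) (B : C) : (forall d, (0 < d)%R -> exists T, forall t, (T < t)%R -> (Cmod (g t - B) < d)%R) ->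
  filterlim g (Rbar_locally p_infty) (locally B).
Proof.
  intros H P [eps HP]. destruct (H eps (cond_pos eps)) as [T HT]. exists T. intros t Ht.
  apply HP. specialize (HT t Ht). split.
  - change (Rabs (fst (g t) - fst B) < eps)%R.
    replace (fst (g t) - fst B)%R with (fst (g t - B)) by (simpl; ring).
    eapply Rle_lt_trans; [|exact HT]. apply Cmod_fst.
  - change (Rabs (snd (g t) - snd B) < eps)%R.
    replace (snd (g t) - snd B)%R with (snd (g t - B)) by (simpl; ring).
    eapply Rle_lt_trans; [|exact HT]. apply Cmod_snd.
Qed.

Lemma lim_C_to (g : R -> C) (B : C) : filterlim g (Rbar_locally p_infty) (locally B) ->
  (forall d, (0 < d)%R -> exists T, forall t, (T < t)%R -> (Cmod (g t - B) < d)%R).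
Proof.
  intros H d Hd. assert (Hd2 : (0 < d / 2)%R) by lra.
  destruct (H (ball B (mkposreal _ Hd2)) (locally_ball _ _)) as [T HT].
  exists T. intros t Ht. destruct (HT t Ht) as [B1 B2]. simpl in B1, B2.
  eapply Rle_lt_trans; [apply Cmod_le_sum|].
  change (Rabs (fst (g t) - fst B) < d/2)%R in B1. change (Rabs (snd (g t) - snd B) < d/2)%R in B2.
  replace (fst (g t - B)) with (fst (g t) - fst B)%R by (simpl; ring).
  replace (snd (g t - B)) with (snd (g t) - snd B)%R by (simpl; ring). lra.
Qed.

Lemma exp_small (c : R) : (0 < c)%R -> exists T, forall t, (T < t)%R -> (exp (- t) < c)%R.
Proof.
  intros Hc. exists (- ln c)%R. intros t Ht. rewrite <- (exp_ln c Hc). apply exp_increasing. lra.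
Qed.

Lemma Cexp_RtoC (r : R) : Cexp (RtoC r) = RtoC (exp r).
Proof. unfold Cexp. simpl. rewrite cos_0, sin_0. apply injective_projections; simpl; ring. Qed.

Lemma cont_exp_curve (B k : C) (t : R) : continuous (fun s => B + k * RtoC (exp (- s))) t.
Proof.
  apply cont_C.
  - eapply continuous_ext. { intros s. simpl. instantiate (1 := fun s => (fst B + (fst k * exp (- s) - snd k * 0))%R). reflexivity. }
    apply (@ex_derive_continuous R_AbsRing R_NormedModule). auto_derive. auto.
  - eapply continuous_ext. { intros s. simpl. instantiate (1 := fun s => (snd B + (fst k * 0 + snd k * exp (- s)))%R). reflexivity. }
    apply (@ex_derive_continuous R_AbsRing R_NormedModule). auto_derive. auto.
Qed.

Section Lam.
Variable lam : C.
Hypothesis hp : lam <> pii.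
Hypothesis hm : lam <> - pii.
Let ha := a_neq0 lam hm.
Let hb := b_neq0 lam hp.

Definition kap (s : R) : C := Ci * (Blam lam - 1) / ((lam + pii) * RtoC s).
Definition gam (s : R) (t : R) : C := Blam lam + kap s * RtoC (exp (- t)).

Lemma kap_neq0 (s : R) : s <> 0%R -> kap s <> 0.
Proof.
  intros Hs E. unfold kap in E. apply Cmult_integral in E. destruct E as [E|E].
  - apply Cmult_integral in E. destruct E as [E|E]. apply Ci_nz; auto.
    apply (B_neq1 lam hm). replace (Blam lam) with (Blam lam - 1 + 1) by ring. rewrite E. ring.
  - assert (H : (lam + pii) * RtoC s <> 0).
    { intros E'. apply Cmult_integral in E'. destruct E' as [E'|E']; auto. apply Hs. apply RtoC_inj. auto. }
    apply (f_equal (fun x => x * ((lam + pii) * RtoC s))) in E. rewrite Cinv_l in E by auto. rewrite Cmult_0_l in E.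
    apply C1_nz. auto.
Qed.

Lemma exp_C_neq0 (t : R) : RtoC (exp t) <> 0.
Proof. intros E. apply RtoC_inj in E. pose proof (exp_pos t). lra. Qed.

Lemma gam_ne (s t : R) : s <> 0%R -> gam s t <> Blam lam.
Proof.
  intros Hs E. unfold gam in E. assert (kap s * RtoC (exp (- t)) = 0).
  { replace (kap s * RtoC (exp (- t))) with (Blam lam + kap s * RtoC (exp (- t)) - Blam lam) by ring. rewrite E. ring. }
  apply Cmult_integral in H. destruct H. apply (kap_neq0 s); auto. apply (exp_C_neq0 (- t)); auto.
Qed.

Lemma gam_M (s t : R) : s <> 0%R -> Mlam lam (gam s t) = RtoC s * Ci * RtoC (exp t) - / (lam + pii).
Proof.
  intros Hs.
  assert (Et : RtoC (exp t) = / RtoC (exp (- t))).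
  { rewrite <- RtoC_inv. f_equal. rewrite exp_Ropp. rewrite Rinv_inv. reflexivity. pose proof (exp_pos (-t)); lra. }
  rewrite Et. pose proof (exp_C_neq0 (- t)). pose proof (B_neq1 lam hm).
  assert (Hs' : RtoC s <> 0) by (intros E; apply Hs; apply RtoC_inj; auto).
  assert (HB1 : Blam lam - 1 <> 0) by (intros E; apply H0; replace (Blam lam) with (Blam lam - 1 + 1) by ring; rewrite E; ring).
  unfold Mlam, gam, kap.
  replace ((lam + pii) * (Blam lam + Ci * (Blam lam - 1) / ((lam + pii) * RtoC s) * RtoC (exp (- t))) - (lam - pii))
    with (Ci * (Blam lam - 1) / RtoC s * RtoC (exp (- t))) by (unfold Blam; field; auto).
  set (E := RtoC (exp (- t))) in *. set (S := RtoC s) in *. set (Bb := Blam lam) in *. set (A := lam + pii) in *. transitivity (- S * / Ci * / E - / A). { field. repeat split; auto. apply Ci_nz. } rewrite Ci_inv. ring.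
Qed.

Lemma pii_Ci : 2 * pii * Ci = RtoC (- (2 * PI)).
Proof. unfold pii. apply injective_projections; simpl; ring. Qed.

Definition K0 : R := Cmod (Cexp (- (2 * pii / (lam + pii)))).

Lemma K0_pos : (0 < K0)%R.
Proof. unfold K0. rewrite Cmod_Cexp. apply exp_pos. Qed.

Lemma glam_gam_mod (s t : R) : s <> 0%R ->
  Cmod (glam lam (gam s t)) = (Cmod (gam s t) * exp (- (2 * PI) * s * exp t) * K0)%R.
Proof.
  intros Hs. unfold glam. rewrite gam_M by auto.
  replace (2 * pii * (RtoC s * Ci * RtoC (exp t) - / (lam + pii)))
    with (RtoC (- (2 * PI) * s * exp t) + - (2 * pii / (lam + pii))).
  - rewrite Cexp_add, Cexp_RtoC, !Cmod_mult, Cmod_R, Rabs_right. unfold K0. ring.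
    apply Rle_ge, Rlt_le, exp_pos.
  - rewrite !RtoC_mult. rewrite <- pii_Ci. unfold Cdiv. ring.
Qed.

Lemma gam_dist (s t : R) : Cmod (gam s t - Blam lam) = (Cmod (kap s) * exp (- t))%R.
Proof.
  unfold gam. replace (Blam lam + kap s * RtoC (exp (- t)) - Blam lam) with (kap s * RtoC (exp (- t))) by ring.
  rewrite Cmod_mult, Cmod_R, Rabs_right. ring. apply Rle_ge, Rlt_le, exp_pos.
Qed.

Lemma gam_lim (s : R) : filterlim (gam s) (Rbar_locally p_infty) (locally (Blam lam)).
Proof.
  apply lim_C_of. intros d Hd. pose proof (Cmod_ge_0 (kap s)).
  destruct (exp_small (d / (Cmod (kap s) + 1))) as [T HT]. apply Rdiv_lt_0_compat; lra.
  exists T. intros t Ht. rewrite gam_dist. specialize (HT t Ht).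
  pose proof (exp_pos (- t)).
  apply (Rmult_lt_compat_l (Cmod (kap s) + 1)) in HT; [|lra].
  replace ((Cmod (kap s) + 1) * (d / (Cmod (kap s) + 1)))%R with d in HT by (field; lra). nra.
Qed.

Lemma asym_zero : asymptotic_value lam (Fin 0).
Proof.
  exists (gam 1). split; [|split; [|split]].
  - intros t. apply cont_exp_curve.
  - intros t. apply gam_ne. lra.
  - apply gam_lim.
  - intros eps Heps. simpl.
    set (C1 := ((Cmod (Blam lam) + Cmod (kap 1)) * K0)%R).
    assert (HC1 : (0 <= C1)%R) by (unfold C1; pose proof K0_pos; pose proof (Cmod_ge_0 (Blam lam)); pose proof (Cmod_ge_0 (kap 1)); nra).
    destruct (exp_small (eps / (C1 + 1))) as [T HT]. apply Rdiv_lt_0_compat; lra.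
    exists (Rmax T 0). intros t Ht. pose proof (Rmax_l T 0). pose proof (Rmax_r T 0).
    specialize (HT t ltac:(lra)).
    replace (glam lam (gam 1 t) - 0) with (glam lam (gam 1 t)) by ring.
    rewrite glam_gam_mod by lra.
    assert (G1 : (Cmod (gam 1 t) <= Cmod (Blam lam) + Cmod (kap 1))%R).
    { eapply Rle_trans. apply Cmod_tri2 with (y := Blam lam). rewrite gam_dist.
      assert (exp (- t) <= 1)%R by (rewrite <- exp_0; destruct (Req_dec t 0); [subst; rewrite Ropp_0; lra|]; apply Rlt_le, exp_increasing; lra).
      pose proof (Cmod_ge_0 (kap 1)). nra. }
    assert (G2 : (exp (- (2 * PI) * 1 * exp t) <= exp (- t))%R).
    { destruct (Req_dec (- (2 * PI) * 1 * exp t) (- t)) as [E|E]; [rewrite E; lra|]. apply Rlt_le, exp_increasing.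
      pose proof (exp_ineq1_le t). pose proof PI2_1. pose proof (exp_pos t). nra. }
    pose proof K0_pos. pose proof (exp_pos (- (2 * PI) * 1 * exp t)). pose proof (Cmod_ge_0 (gam 1 t)).
    assert (Cmod (gam 1 t) * exp (- (2 * PI) * 1 * exp t) * K0 <= C1 * exp (- t))%R.
    { unfold C1. replace ((Cmod (Blam lam) + Cmod (kap 1)) * K0 * exp (- t))%R with
        ((Cmod (Blam lam) + Cmod (kap 1)) * exp (- t) * K0)%R by ring.
      apply Rmult_le_compat_r; [lra|]. apply Rmult_le_compat; lra. }
    apply (Rmult_lt_compat_l (C1 + 1)) in HT; [|lra].
    replace ((C1 + 1) * (eps / (C1 + 1)))%R with eps in HT by (field; lra).
    pose proof (exp_pos (- t)). nra.
Qed.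

Lemma asym_inf : asymptotic_value lam Inf.
Proof.
  exists (gam (-1)). split; [|split; [|split]].
  - intros t. apply cont_exp_curve.
  - intros t. apply gam_ne. lra.
  - apply gam_lim.
  - intros eps Heps. simpl.
    pose proof (proj1 (Cmod_gt_0 _) (B_neq0 lam hp hm)) as HB.
    set (b := Cmod (Blam lam)) in *. set (k := Cmod (kap (-1))). pose proof (Cmod_ge_0 (kap (-1))). fold k in H.
    pose proof K0_pos.
    destruct (exp_small (b / (2 * (k + 1)))) as [T1 HT1]. apply Rdiv_lt_0_compat; lra.
    set (T2 := (2 / (eps * b * K0))%R).
    assert (HT2 : (0 < T2)%R) by (unfold T2; apply Rdiv_lt_0_compat; [lra|]; apply Rmult_lt_0_compat; [nra|lra]).
    exists (Rmax T1 T2). intros t Ht. pose proof (Rmax_l T1 T2). pose proof (Rmax_r T1 T2).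
    specialize (HT1 t ltac:(lra)).
    rewrite glam_gam_mod by lra.
    replace (- (2 * PI) * -1 * exp t)%R with (2 * PI * exp t)%R by ring.
    assert (G1 : (b / 2 < Cmod (gam (-1) t))%R).
    { pose proof (Cmod_tri2 (Blam lam) (gam (-1) t)).
      replace (Blam lam - gam (-1) t) with (- (gam (-1) t - Blam lam)) in H3 by ring.
      rewrite Cmod_opp, gam_dist in H3. fold b k in H3.
      pose proof (exp_pos (- t)).
      apply (Rmult_lt_compat_l (k + 1)) in HT1; [|lra].
      replace ((k + 1) * (b / (2 * (k + 1))))%R with (b / 2)%R in HT1 by (field; lra). nra. }
    assert (G2 : (t < exp (2 * PI * exp t))%R).
    { pose proof (exp_ineq1_le (2 * PI * exp t)). pose proof (exp_ineq1_le t). pose proof PI2_1.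
      pose proof (exp_pos t). nra. }
    assert (G3 : (/ eps < b / 2 * t * K0)%R).
    { assert (T2 < t)%R by lra. unfold T2 in H3.
      apply (Rmult_lt_compat_l (eps * b * K0 / 2)) in H3; [|apply Rmult_lt_0_compat; [|lra]; apply Rmult_lt_0_compat; nra].
      replace (eps * b * K0 / 2 * (2 / (eps * b * K0)))%R with 1%R in H3 by (field; repeat split; lra).
      apply (Rmult_lt_reg_l eps); auto. rewrite Rinv_r by lra. nra. }
    assert (0 <= t)%R by lra.
    assert (b / 2 * t <= Cmod (gam (-1) t) * exp (2 * PI * exp t))%R.
    { apply Rmult_le_compat; lra. }
    apply (Rlt_le_trans _ _ _ G3). apply Rmult_le_compat_r; lra.
Qed.
End Lam.
Open Scope C_scope.

Lemma key_ineq (B c ga gb : C) (r r' eps : R) : (0 < r)%R -> (0 < r')%R ->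
  (Cmod (ga - B) < Cmod B / 2)%R -> (Cmod (gb - B) < Cmod B / 2)%R ->
  (Cmod (ga * RtoC r - c) < eps)%R -> (Cmod (gb * RtoC (- r') - c) < eps)%R -> (Cmod c < 7 * eps)%R.
Proof.
  intros Hr Hr' Ha Hb H1 H2.
  assert (S1 : (Cmod (ga * RtoC r + gb * RtoC r') < 2 * eps)%R).
  { replace (ga * RtoC r + gb * RtoC r') with ((ga * RtoC r - c) + - (gb * RtoC (- r') - c)) by (rewrite RtoC_opp; ring).
    eapply Rle_lt_trans. apply Cmod_triangle. rewrite Cmod_opp. lra. }
  assert (S2 : ((r + r') * Cmod B <= Cmod (ga * RtoC r + gb * RtoC r') + r * Cmod (ga - B) + r' * Cmod (gb - B))%R).
  { replace ((r + r') * Cmod B)%R with (Cmod (RtoC (r + r') * B)) by (rewrite Cmod_mult, Cmod_R, Rabs_right by lra; ring).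
    replace (RtoC (r + r') * B) with ((ga * RtoC r + gb * RtoC r') + (- (RtoC r * (ga - B)) + - (RtoC r' * (gb - B)))) by (rewrite RtoC_plus; ring).
    eapply Rle_trans. apply Cmod_triangle. rewrite Rplus_assoc. apply Rplus_le_compat_l.
    eapply Rle_trans. apply Cmod_triangle. rewrite !Cmod_opp, !Cmod_mult, !Cmod_R, !Rabs_right by lra. lra. }
  assert (S3 : (Cmod c <= Cmod ga * r + eps)%R).
  { pose proof (Cmod_tri2 c (ga * RtoC r)). replace (c - ga * RtoC r) with (- (ga * RtoC r - c)) in H by ring.
    rewrite Cmod_opp, Cmod_mult, Cmod_R, Rabs_right in H by lra. lra. }
  assert (S4 : (Cmod ga <= Cmod B + Cmod (ga - B))%R) by apply Cmod_tri2.
  pose proof (Cmod_ge_0 B).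
  assert (r * Cmod (ga - B) <= r * (Cmod B / 2))%R by (apply Rmult_le_compat_l; lra).
  assert (r' * Cmod (gb - B) <= r' * (Cmod B / 2))%R by (apply Rmult_le_compat_l; lra).
  assert (HrB : (r * Cmod B < 4 * eps)%R) by nra.
  assert (Cmod ga * r <= (3 / 2 * Cmod B) * r)%R by (apply Rmult_le_compat_r; lra).
  nra.
Qed.

Section Lam.
Variable lam : C.
Hypothesis hp : lam <> pii.
Hypothesis hm : lam <> - pii.
Let ha := a_neq0 lam hm.
Let hb := b_neq0 lam hp.

Lemma cont_M_comp (g : R -> C) : (forall t, continuous g t) -> (forall t, g t <> Blam lam) ->
  continuity (fun s => fst (Mlam lam (g s))).
Proof.
  intros Hc Hn t. apply continuity_pt_filterlim. intros P [eps HP].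
  assert (Hd : ex_derive (Mlam lam) (g t)) by (eexists; apply D_Mlam; apply Dn_neq0; auto).
  assert (Hm := @ex_derive_continuous C_AbsRing C_NormedModule (Mlam lam) (g t) Hd).
  specialize (Hm (fun v => P (fst v))).
  assert (L1 : locally (Mlam lam (g t)) (fun v => P (fst v))).
  { exists eps. intros v [Hv1 Hv2]. apply HP. exact Hv1. }
  specialize (Hm L1).
  apply locally_C in Hm.
  exact (Hc t _ Hm).
Qed.

Lemma ybound (gt u c B : C) (eps : R) : (0 < Cmod B)%R -> (0 < eps)%R -> Cmod c = (7 * eps)%R ->
  (Cmod (gt * Cexp (2 * pii * u) - c) < eps)%R -> (Cmod (gt - B) < Cmod B / 2)%R ->
  (Rabs (snd u) <= 16 * eps / Cmod B + / (4 * eps / Cmod B))%R.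
Proof.
  intros HB He Hc H1 H2.
  set (q := exp (- (2 * PI * snd u))).
  assert (Hq : Cmod (Cexp (2 * pii * u)) = q) by (rewrite Cmod_Cexp, two_pii_mult; reflexivity).
  assert (q0 : (0 < q)%R) by apply exp_pos.
  pose proof (Cmod_tri2 gt B). pose proof (Cmod_tri2 B gt).
  replace (B - gt) with (- (gt - B)) in H0 by ring. rewrite Cmod_opp in H0.
  pose proof (Cmod_tri2 (gt * Cexp (2 * pii * u)) c). pose proof (Cmod_tri2 c (gt * Cexp (2 * pii * u))).
  replace (c - gt * Cexp (2 * pii * u)) with (- (gt * Cexp (2 * pii * u) - c)) in H4 by ring.
  rewrite Cmod_opp in H4. rewrite Cmod_mult, Hq in H3, H4.
  set (G := Cmod gt) in *.
  assert (Up : (q * (Cmod B / 2) < 8 * eps)%R) by nra.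
  assert (Lo : (6 * eps < q * (3 * Cmod B / 2))%R) by nra.
  set (U := (16 * eps / Cmod B)%R). set (Lw := (4 * eps / Cmod B)%R).
  assert (HU : (q < U)%R).
  { unfold U. apply (Rmult_lt_reg_r (Cmod B / 2)); [lra|]. replace (16 * eps / Cmod B * (Cmod B / 2))%R with (8 * eps)%R by (field; lra). lra. }
  assert (HL : (Lw < q)%R).
  { unfold Lw. apply (Rmult_lt_reg_r (3 * Cmod B / 2)); [lra|]. replace (4 * eps / Cmod B * (3 * Cmod B / 2))%R with (6 * eps)%R by (field; lra). lra. }
  assert (HLw : (0 < Lw)%R) by (unfold Lw; apply Rdiv_lt_0_compat; lra).
  assert (Z1 : (- (2 * PI * snd u) < U)%R).
  { apply exp_lt_inv. fold q. pose proof (exp_ineq1_le U). lra. }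
  assert (Z2 : (- / Lw < - (2 * PI * snd u))%R).
  { apply exp_lt_inv. fold q. rewrite exp_Ropp.
    pose proof (exp_ineq1_le (/ Lw)). pose proof (exp_pos (/ Lw)).
    apply (Rmult_lt_reg_r (exp (/ Lw))); auto. rewrite Rinv_l by lra.
    assert (Lw * exp (/ Lw) > Lw * / Lw)%R by (apply Rmult_lt_compat_l; lra).
    rewrite Rinv_r in H7 by lra. nra. }
  pose proof PI2_1. pose proof (Rinv_0_lt_compat _ HLw).
  apply Rabs_le. split.
  - destruct (Rle_dec 0 (snd u)); [nra|]. nra.
  - destruct (Rle_dec 0 (snd u)); [|nra]. nra.
Qed.

Lemma hlarge (w : C) (L : R) : (0 < L)%R -> w <> Blam lam ->
  (Cmod (w - Blam lam) < Cmod (Blam lam - 1) / 2)%R ->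
  (Cmod (w - Blam lam) < Cmod (Blam lam - 1) / (2 * Cmod (lam + pii) * L))%R ->
  (L < Cmod (Mlam lam w))%R.
Proof.
  intros HL Hw H1 H2.
  pose proof (proj1 (Cmod_gt_0 _) ha) as HA.
  assert (HwB : (0 < Cmod (w - Blam lam))%R).
  { apply Cmod_gt_0. intros E. apply Hw. replace w with (w - Blam lam + Blam lam) by ring. rewrite E. ring. }
  unfold Mlam. fold (Dn lam w). rewrite Dn_B by auto.
  unfold Cdiv. rewrite Cmod_mult, Cmod_opp, Cmod_inv, Cmod_mult.
  2: { intros E. apply Cmult_integral in E. destruct E as [E|E]; [auto|]. rewrite E, Cmod_0 in HwB. lra. }
  pose proof (Cmod_tri2 (Blam lam - 1) (w - 1)).
  replace (Blam lam - 1 - (w - 1)) with (- (w - Blam lam)) in H by ring. rewrite Cmod_opp in H.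
  set (A := Cmod (lam + pii)) in *. set (d := Cmod (w - Blam lam)) in *. set (b1 := Cmod (Blam lam - 1)) in *.
  set (m := Cmod (w - 1)) in *.
  assert (E2 : (L * (A * d) < b1 / 2)%R).
  { apply (Rmult_lt_compat_l (2 * A * L)) in H2; [|nra].
    replace (2 * A * L * (b1 / (2 * A * L)))%R with b1 in H2 by (field; lra). nra. }
  apply (Rmult_lt_reg_r (A * d)); [nra|]. rewrite Rmult_assoc, Rinv_l, Rmult_1_r by nra. lra.
Qed.

Lemma asym_fin (c : C) : asymptotic_value lam (Fin c) -> c = 0.
Proof.
  intros [g [Hc [Hn [Hl Hcl]]]].
  destruct (Ceq_dec c 0) as [|Hc0]; auto. exfalso.
  pose proof (proj1 (Cmod_gt_0 c) Hc0) as Hcp.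
  pose proof (proj1 (Cmod_gt_0 _) (B_neq0 lam hp hm)) as HB.
  set (B := Blam lam) in *.
  set (eps := (Cmod c / 7)%R).
  assert (Heps : (0 < eps)%R) by (unfold eps; lra).
  assert (Hce : Cmod c = (7 * eps)%R) by (unfold eps; field).
  destruct (Hcl eps Heps) as [T1 HT1]. simpl in HT1.
  destruct (lim_C_to g B Hl (Cmod B / 2) ltac:(lra)) as [T2 HT2].
  set (T := Rmax T1 T2).
  assert (Good : forall t, (T < t)%R -> (Cmod (glam lam (g t) - c) < eps)%R /\ (Cmod (g t - B) < Cmod B / 2)%R).
  { intros t Ht. pose proof (Rmax_l T1 T2). pose proof (Rmax_r T1 T2). split; [apply HT1 | apply HT2]; unfold T in Ht; lra. }
  set (h := fun t => Mlam lam (g t)).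
  set (Y := (16 * eps / Cmod B + / (4 * eps / Cmod B))%R).
  assert (Yb : forall t, (T < t)%R -> (Rabs (snd (h t)) <= Y)%R).
  { intros t Ht. destruct (Good t Ht) as [G1 G2]. unfold Y, h.
    apply (ybound (g t) _ c B eps); auto. }
  assert (HY : (0 <= Y)%R) by (apply Rle_trans with (Rabs (snd (h (T + 1)%R))); [apply Rabs_pos | apply Yb; lra]).
  set (t1 := (T + 1)%R). set (x1 := fst (h t1)).
  set (L := (Rabs x1 + Y + 2)%R).
  assert (HL : (0 < L)%R) by (unfold L; pose proof (Rabs_pos x1); lra).
  pose proof (B_neq1 lam hm) as HB1. assert (HB1' : (0 < Cmod (B - 1))%R).
  { apply Cmod_gt_0. intros E. apply HB1. fold B. replace B with (B - 1 + 1) by ring. rewrite E. ring. }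
  pose proof (proj1 (Cmod_gt_0 _) ha) as HA.
  set (r := Rmin (Cmod (B - 1) / 2) (Cmod (B - 1) / (2 * Cmod (lam + pii) * L))).
  assert (Hr : (0 < r)%R).
  { unfold r. apply Rmin_glb_lt. lra. apply Rdiv_lt_0_compat; [lra|]. nra. }
  destruct (lim_C_to g B Hl r Hr) as [T3 HT3].
  set (t2 := (Rmax t1 T3 + 1)%R).
  assert (Ht12 : (t1 < t2)%R) by (unfold t2; pose proof (Rmax_l t1 T3); lra).
  set (x2 := fst (h t2)).
  assert (Hx2 : (Rabs x1 + 2 < Rabs x2)%R).
  { assert (Hh : (L < Cmod (h t2))%R).
    { unfold h. apply hlarge; auto.
      - fold B. specialize (HT3 t2 ltac:(unfold t2; pose proof (Rmax_r t1 T3); lra)). pose proof (Rmin_l (Cmod (B - 1) / 2) (Cmod (B - 1) / (2 * Cmod (lam + pii) * L))). fold r in H. lra.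
      - fold B. specialize (HT3 t2 ltac:(unfold t2; pose proof (Rmax_r t1 T3); lra)). pose proof (Rmin_r (Cmod (B - 1) / 2) (Cmod (B - 1) / (2 * Cmod (lam + pii) * L))). fold r in H. lra. }
    pose proof (Cmod_le_sum (h t2)). pose proof (Yb t2 ltac:(unfold t1 in Ht12; lra)). fold x2 in H. unfold L in Hh. lra. }
  set (f := fun t => fst (h t)).
  assert (Hf : continuity f) by (apply cont_M_comp; auto).
  set (lo := Rmin x1 x2). set (hi := Rmax x1 x2).
  assert (Hlh : (lo + 2 < hi)%R).
  { unfold lo, hi. destruct (Rle_dec x1 x2).
    - rewrite Rmin_left, Rmax_right by lra. apply Rabs_le_between' in Hx2 || idtac.
      destruct (Rle_dec 0 x1); destruct (Rle_dec 0 x2);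
        repeat (first [rewrite (Rabs_right x1) in Hx2 by lra | rewrite (Rabs_left x1) in Hx2 by lra]);
        repeat (first [rewrite (Rabs_right x2) in Hx2 by lra | rewrite (Rabs_left x2) in Hx2 by lra]); lra.
    - rewrite Rmin_right, Rmax_left by lra.
      destruct (Rle_dec 0 x1); destruct (Rle_dec 0 x2);
        repeat (first [rewrite (Rabs_right x1) in Hx2 by lra | rewrite (Rabs_left x1) in Hx2 by lra]);
        repeat (first [rewrite (Rabs_right x2) in Hx2 by lra | rewrite (Rabs_left x2) in Hx2 by lra]); lra. }
  set (k := up lo). destruct (archimed lo) as [Hk1 Hk2]. fold k in Hk1, Hk2.
  destruct (IVT_gen f t1 t2 (IZR k) Hf) as [ta [Hta Hfa]].
  { fold lo hi. unfold f. fold x1 x2. fold lo hi. lra. }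
  destruct (IVT_gen f t1 t2 (IZR k + /2) Hf) as [tb [Htb Hfb]].
  { fold lo hi. unfold f. fold x1 x2. fold lo hi. lra. }
  rewrite Rmin_left, Rmax_right in Hta, Htb by lra.
  destruct (Good ta ltac:(unfold t1 in Hta; lra)) as [Ga1 Ga2].
  destruct (Good tb ltac:(unfold t1 in Htb; lra)) as [Gb1 Gb2].
  unfold glam in Ga1, Gb1.
  rewrite (Cexp_int _ k) in Ga1 by exact Hfa.
  rewrite (Cexp_half _ k) in Gb1 by exact Hfb.
  assert (Cmod c < 7 * eps)%R.
  { eapply (key_ineq B c (g ta) (g tb)); [| |exact Ga2|exact Gb2|exact Ga1|exact Gb1]; apply exp_pos. }
  lra.
Qed.
End Lam.
Open Scope C_scope.

Section Lam.
Variable lam : C.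
Hypothesis hp : lam <> pii.
Hypothesis hm : lam <> - pii.

Lemma Fin_inj (x y : C) : Fin x = Fin y -> x = y.
Proof. intros H. injection H. auto. Qed.

Lemma ex_all (p : sphere) : p <> Fin (Blam lam) -> ex_derive (local_expr (gS lam) p) (coord_at p p).
Proof.
  destruct p as [w|]; intros Hp.
  - exists (gd lam w). apply D_glam. apply Dn_neq0; auto. intros E; apply Hp; subst; reflexivity.
  - apply ex_inf; auto.
Qed.

Lemma fixed_all (p : sphere) : p <> Fin (Blam lam) ->
      (gS lam p = p <->
        p = Fin 0 \/ p = Inf \/
        exists s : Z, wstar_den lam s <> 0 /\ p = Fin (wstar_num lam s / wstar_den lam s)).
Proof.
  destruct p as [w|]; intros Hp.
  - assert (Hw : w <> Blam lam) by (intros E; apply Hp; subst; reflexivity).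
    pose proof (fixed_fin lam hm w Hw) as F. simpl. split.
    + intros H. apply Fin_inj in H. apply F in H. destruct H as [H|[s [H1 H2]]].
      * left. subst. reflexivity.
      * right; right. exists s. split; auto. subst. reflexivity.
    + intros [H|[H|[s [H1 H2]]]].
      * apply Fin_inj in H. f_equal. apply F. auto.
      * discriminate.
      * apply Fin_inj in H2. f_equal. apply F. right. exists s. auto.
  - simpl. split; auto.
Qed.

Lemma crit_iff (p : sphere) : critical_point lam p <-> p = Fin 1 \/ p = Fin (Clam lam).
Proof.
  split.
  - intros [Hp Hd]. destruct p as [w|].
    + assert (Hw : w <> Blam lam) by (intros E; apply Hp; subst; reflexivity).
      assert (HD := Dn_neq0 lam w hm Hw).
      assert (H1 : is_derive (glam lam) w (gd lam w)) by (apply D_glam; auto).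
      assert (H2 : gd lam w = 0) by (apply (D_unique (glam lam) w); [exact H1 | exact Hd]).
      destruct (gd_zero lam hm w HD H2) as [E|E]; subst; auto.
    + exfalso. pose proof (D_inf lam hm) as H1.
      pose proof (D_unique _ _ _ _ H1 Hd). apply (Cexp_neq0 _ H).
  - intros [E|E]; subst; split.
    + intros E. apply Fin_inj in E. apply (B_neq1 lam hm). auto.
    + unfold local_deriv. simpl. rewrite <- (gd_1 lam). apply D_glam. rewrite Dn_1.
      intros E. apply pii_neq0. replace pii with (/2 * (2 * pii)) by field. rewrite E. ring.
    + intros E. apply Fin_inj in E. apply (C_neq_B lam hp hm). auto.
    + unfold local_deriv. simpl. rewrite <- (gd_C lam hp hm). apply D_glam. apply Dn_neq0; auto. apply C_neq_B; auto.
Qed.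

Definition Sset (q : sphere) : Prop := critical_value lam q \/ asymptotic_value lam q.

Lemma S_cases (q : sphere) : Sset q -> q = Fin 0 \/ q = Inf \/ q = Fin 1 \/ q = Fin (glam lam (Clam lam)).
Proof.
  intros [[p [Hp Hq]]|Ha].
  - apply crit_iff in Hp. destruct Hp as [E|E]; subst; simpl.
    + right; right; left. rewrite glam_1. reflexivity.
    + right; right; right. reflexivity.
  - destruct q as [c|].
    + left. rewrite (asym_fin lam hp hm c Ha). reflexivity.
    + right; left; reflexivity.
Qed.

Lemma sph_close_refl (eps : R) (a : sphere) : (0 < eps)%R -> sph_close eps a a.
Proof. intros He. destruct a; simpl; auto. replace (z - z) with (RtoC 0) by ring. rewrite Cmod_0. lra. Qed.

Lemma sing_iff (a : sphere) : singular_value lam a <->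
      a = Fin 0 \/ a = Inf \/ a = Fin 1 \/ a = gS lam (Fin (Clam lam)).
Proof.
  split.
  - intros H. destruct a as [z|]; [|right; left; reflexivity].
    destruct (Ceq_dec z 0) as [E|E0]; [left; subst; reflexivity|].
    destruct (Ceq_dec z 1) as [E|E1]; [right; right; left; subst; reflexivity|].
    destruct (Ceq_dec z (glam lam (Clam lam))) as [E|E2]; [right; right; right; subst; reflexivity|].
    exfalso.
    assert (P0 : (0 < Cmod (z - 0))%R) by (apply Cmod_gt_0; intros E; apply E0; replace z with (z - 0 + 0) by ring; rewrite E; ring).
    assert (P1 : (0 < Cmod (z - 1))%R) by (apply Cmod_gt_0; intros E; apply E1; replace z with (z - 1 + 1) by ring; rewrite E; ring).
    assert (P2 : (0 < Cmod (z - glam lam (Clam lam)))%R) by (apply Cmod_gt_0; intros E; apply E2; replace z with (z - glam lam (Clam lam) + glam lam (Clam lam)) by ring; rewrite E; ring).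
    set (eps := Rmin (Cmod (z - 0)) (Rmin (Cmod (z - 1)) (Cmod (z - glam lam (Clam lam))))).
    assert (He : (0 < eps)%R) by (unfold eps; repeat apply Rmin_glb_lt; auto).
    destruct (H eps He) as [q [Sq Cq]].
    pose proof (Rmin_l (Cmod (z - 0)) (Rmin (Cmod (z - 1)) (Cmod (z - glam lam (Clam lam))))).
    pose proof (Rmin_r (Cmod (z - 0)) (Rmin (Cmod (z - 1)) (Cmod (z - glam lam (Clam lam))))).
    pose proof (Rmin_l (Cmod (z - 1)) (Cmod (z - glam lam (Clam lam)))).
    pose proof (Rmin_r (Cmod (z - 1)) (Cmod (z - glam lam (Clam lam)))).
    fold eps in H0, H1.
    destruct (S_cases q Sq) as [Q|[Q|[Q|Q]]]; subst q; simpl in Cq; try contradiction;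
      rewrite <- Cmod_opp in Cq;
      match type of Cq with (Cmod ?u < _)%R => match goal with |- _ => idtac end end.
    + replace (- (0 - z)) with (z - 0) in Cq by ring. lra.
    + replace (- (1 - z)) with (z - 1) in Cq by ring. lra.
    + replace (- (glam lam (Clam lam) - z)) with (z - glam lam (Clam lam)) in Cq by ring. lra.
  - intros Ha eps He. exists a. split; [|apply sph_close_refl; auto].
    destruct Ha as [E|[E|[E|E]]]; subst.
    + right. apply asym_zero; auto.
    + right. apply asym_inf; auto.
    + left. exists (Fin 1). split. apply crit_iff. left; reflexivity. simpl. rewrite glam_1. reflexivity.
    + left. exists (Fin (Clam lam)). split. apply crit_iff. right; reflexivity. reflexivity.
Qed.

End Lam.

Theorem lemma5p5 (lam : C) (hp : lam <> pii) (hm : lam <> - pii) :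
  ((forall p : sphere, p <> Fin (Blam lam) -> ex_derive (local_expr (gS lam) p) (coord_at p p))
   /\ essential_singularity_at lam (Blam lam)) /\
  ((forall p : sphere, p <> Fin (Blam lam) ->
      (gS lam p = p <->
        p = Fin 0 \/ p = Inf \/
        exists s : Z, wstar_den lam s <> 0 /\ p = Fin (wstar_num lam s / wstar_den lam s)))
   /\ local_deriv (gS lam) (Fin 0) (Cexp (2 * pii / (pii - lam)))
   /\ local_deriv (gS lam) Inf (Cexp (2 * pii / (pii + lam)))
   /\ (forall s : Z, wstar_den lam s <> 0 ->
        local_deriv (gS lam) (Fin (wstar_num lam s / wstar_den lam s))
          (1 - wstar_num lam s * wstar_den lam s))) /\
  (asymptotic_value lam (Fin 0) /\ asymptotic_value lam Inf /\
   gS lam (Fin 0) = Fin 0 /\ gS lam Inf = Inf /\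
   critical_point lam (Fin 1) /\ gS lam (Fin 1) = Fin 1 /\
   (forall p : sphere, critical_point lam p <-> p = Fin 1 \/ p = Fin (Clam lam)) /\
   (forall a : sphere, singular_value lam a <->
      a = Fin 0 \/ a = Inf \/ a = Fin 1 \/ a = gS lam (Fin (Clam lam)))).
Proof.
  split; [split|split; [split; [|split; [|split]]|]].
  - apply ex_all; auto.
  - apply ess_sing; auto.
  - apply fixed_all; auto.
  - unfold local_deriv. simpl. rewrite <- (gd_0 lam hp). apply D_glam.
    unfold Dn. intros E. apply (b_neq0 lam hp). replace (lam - pii) with (- ((lam + pii) * 0 - (lam - pii))) by ring. rewrite E. ring.
  - apply D_inf; auto.
  - intros s Hs. unfold local_deriv. simpl. rewrite <- (gd_wstar lam s Hs). apply D_glam.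
    unfold wstar_num, wstar_den in *. rewrite (Cmult_comm (lam + pii)) in *. rewrite (Cmult_comm (lam - pii)). apply Minv_Dn_neq0; auto.
  - split; [apply asym_zero; auto|]. split; [apply asym_inf; auto|].
    split; [simpl; f_equal; unfold glam; ring|]. split; [reflexivity|].
    split; [apply crit_iff; auto|]. split; [simpl; rewrite glam_1; reflexivity|].
    split; [apply crit_iff; auto|]. apply sing_iff; auto.
Qed.
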